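(* Let $L$ be an $r\times n$ $\boldsymbol\rho$-latin rectangle with $r<n$. Then $L$ can be completed to an $n\times n$ $\boldsymbol\rho$-latin square if and only if $\rho_\ell-e_\ell\le n-r$ for all $\ell\in[k]$ and one (equivalently, given the first condition, every one) of the following six conditions holds: (1) $|J|(n-r)\le\sum_{\ell\in[k]}\min\{\rho_\ell-e_\ell,\ \mu_J(\ell)\}$ for all $J\subseteq[n]$; (2) $\sum_{\ell\in K}(\rho_\ell-e_\ell)\le\sum_{j\in[n]}\min\{n-r,\ \mu_K(j)\}$ for all $K\subseteq[k]$; (3) $|J|(n-r)\ge\sum_{\ell\in[k]}\big((\rho_\ell-e_\ell)\dot-\mu_{\bar J}(\ell)\big)$ for all $J\subseteq[n]$; (4) $\sum_{\ell\in K}(\rho_\ell-e_\ell)\ge\sum_{j\in[n]}\big((n-r)\dot-\mu_{\bar K}(j)\big)$ for all $K\subseteq[k]$; (5) $|J|(n-r)\le\sum_{\ell\in K}(\rho_\ell-e_\ell)+\mu_J(\bar K)$ for all $J\subseteq[n]$ and $K\subseteq[k]$; (6) $\sum_{\ell\in K}(\rho_\ell-e_\ell)\le|J|(n-r)+\mu_K(\bar J)$ for all $J\subseteq[n]$ and $K\subseteq[k]$.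
   Context: Let $n,k$ be positive integers. Let $\boldsymbol\rho=(\rho_1,\dots,\rho_k)$ be integers with $1\le\rho_\ell\le n\le k$ and $\sum_{\ell\in[k]}\rho_\ell=n^2$. The symbols are the elements of $[k]$. A $\boldsymbol\rho$-latin square of order $n$ is an $n\times n$ array with entries in $[k]$, each symbol at most once per row and per column, and symbol $\ell$ occurring exactly $\rho_\ell$ times. An $r\times s$ $\boldsymbol\rho$-latin rectangle is an $r\times s$ array with entries in $[k]$, each symbol at most once per row and per column, and symbol $\ell$ occurring at most $\rho_\ell$ times. Completing it means finding a $\boldsymbol\rho$-latin square of order $n$ whose top-left subarray is $L$. Here $s=n$, so the columns are $[n]$. $e_\ell$ is the number of occurrences of $\ell$ in $L$. For $j\in[n]$, $\ell\in[k]$, $J\subseteq[n]$, $K\subseteq[k]$: - $\mu_K(j)$ is the number of symbols of $K$ not occurring in column $j$ of $L$; - $\mu_J(\ell)$ is the number of columns in $J$ not containing $\ell$; - $\mu_J(K)=\sum_{\ell\in K}\mu_J(\ell)$ and $\mu_K(J)=\sum_{j\in J}\mu_K(j)$. $\bar J=[n]\setminus J$, $\bar K=[k]\setminus K$, and $x\dot- y=\max\{0,x-y\}$. *)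

(* Defs.v *)
(* Symbols [k] are represented by 'I_k (symbol l+1 <-> ordinal l),
   rows/columns [n] by 'I_n. *)
From mathcomp Require Import all_boot.
Set Implicit Arguments. Unset Strict Implicit. Unset Printing Implicit Defensive.

Section Latin.
Variables (n k : nat) (rho : 'I_k -> nat).

Definition rho_latin_rect (r : nat) (L : 'I_r -> 'I_n -> 'I_k) : Prop :=
  [/\ (forall (i : 'I_r) (j1 j2 : 'I_n), L i j1 = L i j2 -> j1 = j2),
      (forall (j : 'I_n) (i1 i2 : 'I_r), L i1 j = L i2 j -> i1 = i2) &
      (forall l : 'I_k, #|[set p : 'I_r * 'I_n | L p.1 p.2 == l]| <= rho l)].

Definition rho_latin_square (S : 'I_n -> 'I_n -> 'I_k) : Prop :=
  [/\ (forall (i : 'I_n) (j1 j2 : 'I_n), S i j1 = S i j2 -> j1 = j2),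
      (forall (j : 'I_n) (i1 i2 : 'I_n), S i1 j = S i2 j -> i1 = i2) &
      (forall l : 'I_k, #|[set p : 'I_n * 'I_n | S p.1 p.2 == l]| = rho l)].

Definition completable (r : nat) (L : 'I_r -> 'I_n -> 'I_k) : Prop :=
  exists S : 'I_n -> 'I_n -> 'I_k, rho_latin_square S /\
    forall (i : 'I_n) (i' : 'I_r) (j : 'I_n), nat_of_ord i = nat_of_ord i' ->
      S i j = L i' j.

(* e_l : number of occurrences of l in L *)
Definition occ (r : nat) (L : 'I_r -> 'I_n -> 'I_k) (l : 'I_k) : nat :=
  #|[set p : 'I_r * 'I_n | L p.1 p.2 == l]|.

(* mu_K(j) : number of symbols of K not occurring in column j of L *)
Definition mu_col (r : nat) (L : 'I_r -> 'I_n -> 'I_k) (K : {set 'I_k}) (j : 'I_n) : nat :=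
  #|[set l in K | [forall i : 'I_r, L i j != l]]|.

(* mu_J(l) : number of columns in J not containing l *)
Definition mu_sym (r : nat) (L : 'I_r -> 'I_n -> 'I_k) (J : {set 'I_n}) (l : 'I_k) : nat :=
  #|[set j in J | [forall i : 'I_r, L i j != l]]|.

Definition mu_JK (r : nat) (L : 'I_r -> 'I_n -> 'I_k) (J : {set 'I_n}) (K : {set 'I_k}) : nat :=
  \sum_(l in K) mu_sym L J l.

Definition mu_KJ (r : nat) (L : 'I_r -> 'I_n -> 'I_k) (K : {set 'I_k}) (J : {set 'I_n}) : nat :=
  \sum_(j in J) mu_col L K j.

End Latin.

(* Main.v *)
Require Import Defs.
From mathcomp Require Import all_boot.
From mathcomp Require Import zify.
Set Implicit Arguments. Unset Strict Implicit. Unset Printing Implicit Defensive.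

Lemma sumJ (T : finType) (J : {pred T}) (F : T -> nat) :
  \sum_(x in J) F x = \sum_x ((x \in J) * F x).
Proof. by rewrite big_mkcond; apply: eq_bigr => x _; case: (x \in J); rewrite ?mul1n ?mul0n. Qed.

Lemma card_setE (T : finType) (A : {pred T}) (P : pred T) :
  #|[set x in A | P x]| = \sum_(x in A) P x.
Proof.
rewrite -sum1_card [RHS]big_mkcond [LHS]big_mkcond; apply: eq_bigr => x _.
by rewrite !inE; case: (x \in A); case: (P x).
Qed.

Lemma sumUI (T : finType) (J1 J2 : {set T}) (F : T -> nat) :
  \sum_(x in J1 :|: J2) F x + \sum_(x in J1 :&: J2) F x
  = \sum_(x in J1) F x + \sum_(x in J2) F x.
Proof.
rewrite (sumJ (J1 :|: J2)) (sumJ (J1 :&: J2)) (sumJ J1) (sumJ J2) -!big_split.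
apply: eq_bigr => x _; rewrite !inE.
by case: (x \in J1); case: (x \in J2); rewrite /= ?mul1n ?mul0n ?addn0.
Qed.

Section Flow.
Variables X Y : finType.
Implicit Types (A H : {set X * Y}) (J : {set X}) (K : {set Y}).

Definition eJK A J K : nat := \sum_(p in A) ((p.1 \in J) && (p.2 \notin K)).
Definition dX H x := #|[set p in H | p.1 == x]|.
Definition dY H y := #|[set p in H | p.2 == y]|.
Definition fcond A (a : X -> nat) (b : Y -> nat) :=
  forall J K, \sum_(x in J) a x <= \sum_(y in K) b y + eJK A J K.

Lemma eJK_D1 A e J K : e \in A ->
  eJK A J K = eJK (A :\ e) J K + ((e.1 \in J) && (e.2 \notin K)).
Proof. by move=> eA; rewrite /eJK (big_setD1 _ eA) addnC. Qed.

Lemma sum_delta (T : finType) (J : {pred T}) (j : T) :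
  \sum_(x in J) (x == j) = (j \in J).
Proof.
rewrite sumJ (bigD1 j) //= eqxx muln1 big1 ?addn0 // => x /negbTE ->.
by rewrite muln0.
Qed.

Lemma sum_shift (T : finType) (J : {pred T}) (a : T -> nat) j : 0 < a j ->
  \sum_(x in J) a x = \sum_(x in J) (a x - (x == j)) + (j \in J).
Proof.
move=> aj; rewrite -sum_delta -big_split /=; apply: eq_bigr => x _.
by case: eqP => [->|]; lia.
Qed.

Lemma dX_set1U A e x : e \notin A -> dX (e |: A) x = (e.1 == x) + dX A x.
Proof.
move=> eA; rewrite /dX !card_setE big_setU1 //=.
Qed.

Lemma dY_set1U A e y : e \notin A -> dY (e |: A) y = (e.2 == y) + dY A y.
Proof.
move=> eA; rewrite /dY !card_setE big_setU1 //=.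
Qed.

Lemma flow_empty a b : fcond set0 a b ->
  exists H, H \subset set0 /\ (forall x, dX H x = a x) /\ (forall y, dY H y <= b y).
Proof.
move=> hc; exists set0; split=> //; split=> [x|y]; last by rewrite /dY card_setE big_set0.
have := hc [set x] set0; rewrite big_set1 big_set0 /eJK big_set0.
by rewrite /dX card_setE big_set0; lia.
Qed.

Lemma flow_le (a : X -> nat) (b : Y -> nat) A : fcond A a b ->
  exists H, H \subset A /\ (forall x, dX H x = a x) /\ (forall y, dY H y <= b y).
Proof.
move: {2}#|A| (leqnn #|A|) => N.
elim: N A a b => [|N IH] A a b hA hc.
  move: hA; rewrite leqn0 cards_eq0 => /eqP A0; subst A; exact: flow_empty.
case: (set_0Vmem A) => [A0|[e eA]]; first by subst A; exact: flow_empty.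
have hA' : #|A :\ e| <= N by move: hA; rewrite (cardsD1 e A) eA; lia.
case: (boolP [forall J : {set X}, forall K : {set Y},
    \sum_(x in J) a x <= \sum_(y in K) b y + eJK (A :\ e) J K]).
  move/forallP=> h1.
  have [H [HA [H1 H2]]] := IH _ a b hA' (fun J K => (forallP (h1 J)) K).
  by exists H; split=> //; apply: subset_trans HA (subD1set _ _).
rewrite negb_forall => /existsP [J1]; rewrite negb_forall => /existsP [K1].
rewrite -ltnNge => hJ1.
have hc1 := hc J1 K1; rewrite (eJK_D1 _ _ eA) in hc1.
have eJ1 : e.1 \in J1 by case: (e.1 \in J1) hc1 => //=; lia.
have eK1 : e.2 \notin K1 by case: (e.2 \notin K1) hc1; rewrite ?andbF //=; lia.
have aj : 0 < a e.1.
  rewrite lt0n; apply/negP => /eqP aj0.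
  have := hc (J1 :\ e.1) K1.
  have : \sum_(x in J1) a x = \sum_(x in J1 :\ e.1) a x.
    by rewrite (big_setD1 _ eJ1) aj0.
  have : eJK A (J1 :\ e.1) K1 + 1 <= eJK A J1 K1.
    rewrite /eJK (big_setD1 _ eA) [X in _ <= X](big_setD1 _ eA) /= !inE eqxx eJ1 eK1 /=.
    rewrite add0n addnC leq_add2l; apply: leq_sum => p _; rewrite !inE.
    by case: (p.1 != e.1); case: (p.1 \in J1); case: (p.2 \in K1).
  have := eJK_D1 J1 K1 eA; rewrite eJ1 eK1 /=; lia.
have bl : 0 < b e.2.
  rewrite lt0n; apply/negP => /eqP bl0.
  have := hc J1 (e.2 |: K1).
  have : \sum_(y in e.2 |: K1) b y = \sum_(y in K1) b y.
    by rewrite big_setU1 //= bl0.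
  have : eJK A J1 (e.2 |: K1) + 1 <= eJK A J1 K1.
    rewrite /eJK (big_setD1 _ eA) [X in _ <= X](big_setD1 _ eA) /= !inE eqxx eJ1 eK1 /=.
    rewrite add0n addnC leq_add2l; apply: leq_sum => p _; rewrite !inE.
    by case: (p.2 == e.2); case: (p.2 \in K1); rewrite ?andbF.
  have := eJK_D1 J1 K1 eA; rewrite eJ1 eK1 /=; lia.
pose a' x := a x - (x == e.1).
pose b' y := b y - (y == e.2).
have hc' : fcond (A :\ e) a' b'.
  move=> J2 K2; rewrite leqNgt; apply/negP => hJ2.
  have hc2 := hc J2 K2.
  rewrite (eJK_D1 _ _ eA) (sum_shift J2 aj) (sum_shift K2 bl) in hc2.
  have eJ2 : e.1 \notin J2.
    apply/negP => eJ2; move: hc2 hJ2; rewrite eJ2 /a' /b' /=.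
    by case: (e.2 \in K2); rewrite /= ?addn0 ?addn1; lia.
  have eK2 : e.2 \in K2.
    move: hc2 hJ2; rewrite (negbTE eJ2) /a' /b' /=.
    by case: (e.2 \in K2); rewrite /= ?addn0 ?addn1 //; lia.
  have t2 : \sum_(x in J2) a x = \sum_(y in K2) b y + eJK A J2 K2.
    apply/eqP; rewrite eqn_leq hc.
    rewrite (eJK_D1 _ _ eA) (sum_shift J2 aj) (sum_shift K2 bl) (negbTE eJ2) eK2 /=.
    move: hJ2; rewrite /a' /b'; lia.
  have t1 : \sum_(x in J1) a x = \sum_(y in K1) b y + eJK A J1 K1.
    apply/eqP; rewrite eqn_leq hc.
    move: hJ1; rewrite (eJK_D1 _ _ eA) eJ1 eK1 /=; lia.
  have hU := hc (J1 :|: J2) (K1 :|: K2).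
  have hI := hc (J1 :&: J2) (K1 :&: K2).
  have sa := sumUI J1 J2 a.
  have sb := sumUI K1 K2 b.
  have se : eJK A (J1 :|: J2) (K1 :|: K2) + eJK A (J1 :&: J2) (K1 :&: K2) + 1
            <= eJK A J1 K1 + eJK A J2 K2.
    have g1 : 1 <= \sum_(p in A) [&& p.1 \in J1, p.2 \notin K1, p.1 \notin J2 & p.2 \in K2].
      by rewrite (big_setD1 _ eA) eJ1 eK1 eJ2 eK2.
    apply: leq_trans (leq_add (leqnn _) g1) _.
    rewrite /eJK -!big_split /=; apply: leq_sum => p _; rewrite !inE.
    by case: (p.1 \in J1); case: (p.1 \in J2); case: (p.2 \in K1); case: (p.2 \in K2).
  lia.
have hA'' : #|A :\ e| <= N by [].
have [H [HA [H1 H2]]] := IH _ a' b' hA'' hc'.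
have eH : e \notin H by apply/negP => /(subsetP HA); rewrite !inE eqxx.
exists (e |: H); split; [|split].
- apply/subsetP => p; rewrite !inE => /orP [/eqP -> //|/(subsetP HA)].
  by rewrite !inE => /andP [].
- move=> x; rewrite dX_set1U // H1 /a'.
  case: (x =P e.1) => [->|/eqP ne]; first by rewrite eqxx /=; lia.
  by rewrite eq_sym (negbTE ne) /=; lia.
- move=> y; rewrite dY_set1U //; have := H2 y; rewrite /b'.
  case: (y =P e.2) => [->|/eqP ne]; first by rewrite eqxx /=; lia.
  by rewrite eq_sym (negbTE ne) /=; lia.
Qed.

End Flow.

Lemma sum_fiber (T U : finType) (J : {pred U}) (H : {pred T}) (f : T -> U) :
  \sum_(x in J) \sum_(p in H) (f p == x) = \sum_(p in H) (f p \in J).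
Proof.
rewrite exchange_big; apply: eq_bigr => p _.
rewrite -sum_delta; apply: eq_bigr => x _; by rewrite eq_sym.
Qed.

Lemma sum_le_eq (T : finType) (f g : T -> nat) :
  (forall y, f y <= g y) -> \sum_y f y = \sum_y g y -> forall y, f y = g y.
Proof.
move=> hle hs y; apply/eqP; rewrite eqn_leq hle /=; rewrite leqNgt; apply/negP=> hlt.
have : \sum_y f y < \sum_y g y.
  rewrite (bigD1 y) // [X in _ < X](bigD1 y) //=.
  have : \sum_(i | i != y) f i <= \sum_(i | i != y) g i by apply: leq_sum => i _.
  lia.
by rewrite hs ltnn.
Qed.

Lemma sum_sub (T : finType) (H A : {pred T}) (f : T -> nat) :
  {subset H <= A} -> \sum_(p in H) f p <= \sum_(p in A) f p.
Proof.
move=> HA; rewrite (sumJ H) (sumJ A); apply: leq_sum => p _.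
by case: (boolP (p \in H)) => [/HA -> //|]; rewrite mul0n.
Qed.

Section Flow2.
Variables X Y : finType.
Implicit Types (A H : {set X * Y}) (J : {set X}) (K : {set Y}).

Lemma sum_dX H : \sum_x dX H x = #|H|.
Proof.
rewrite -sum1_card; under eq_bigr do rewrite /dX card_setE.
have := sum_fiber [pred x | true] H (fun p => p.1).
rewrite /= => ->; by apply: eq_bigr.
Qed.

Lemma sum_dY H : \sum_y dY H y = #|H|.
Proof.
rewrite -sum1_card; under eq_bigr do rewrite /dY card_setE.
have := sum_fiber [pred x | true] H (fun p => p.2).
rewrite /= => ->; by apply: eq_bigr.
Qed.

Lemma flow_eq A (a : X -> nat) (b : Y -> nat) :
  \sum_x a x = \sum_y b y -> fcond A a b ->
  exists H, H \subset A /\ (forall x, dX H x = a x) /\ (forall y, dY H y = b y).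
Proof.
move=> hs hc; have [H [HA [H1 H2]]] := flow_le hc.
exists H; split=> //; split=> //; apply: sum_le_eq => //.
by rewrite sum_dY -sum_dX -hs; apply: eq_bigr.
Qed.

Lemma sol_cond A H (a : X -> nat) (b : Y -> nat) :
  H \subset A -> (forall x, dX H x = a x) -> (forall y, dY H y = b y) -> fcond A a b.
Proof.
move=> HA ha hb J K.
have -> : \sum_(x in J) a x = \sum_(p in H) (p.1 \in J).
  rewrite -(sum_fiber J H (fun p => p.1)); apply: eq_bigr => x _.
  by rewrite -ha /dX card_setE.
have -> : \sum_(y in K) b y = \sum_(p in H) (p.2 \in K).
  rewrite -(sum_fiber K H (fun p => p.2)); apply: eq_bigr => x _.
  by rewrite -hb /dY card_setE.
apply: leq_trans (leq_add (leqnn _) (sum_sub _ (subsetP HA))).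
rewrite -big_split; apply: leq_sum => p _.
by case: (p.1 \in J); case: (p.2 \in K).
Qed.

End Flow2.

Lemma sum_option (T : finType) (F : option T -> nat) :
  \sum_o F o = F None + \sum_x F (Some x).
Proof.
rewrite (bigD1 None) //=; congr (_ + _).
rewrite -(big_imset _ (h := Some) (A := predT)); last by move=> x y _ _ [].
apply: eq_bigl => o; case: o => [x|] /=.
  by apply/esym/imsetP; exists x.
by apply/esym/imsetP => [[x]].
Qed.

Lemma sum_pair (X Y : finType) (F : X * Y -> nat) :
  \sum_p F p = \sum_x \sum_y F (x, y).
Proof. by rewrite pair_big; apply: eq_big => // [[x y]]. Qed.

Section Row.
Variables X Y : finType.
Variable H : {set X * Y}.

Lemma dX_sum x : dX H x = \sum_y ((x, y) \in H).
Proof.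
rewrite /dX card_setE sumJ sum_pair (bigD1 x) //=.
rewrite [X in _ + X]big1 ?addn0.
  by apply: eq_bigr => y _; rewrite eqxx muln1.
by move=> x' /negbTE ne; apply: big1 => y _; rewrite /= ne muln0.
Qed.

Lemma dY_sum y : dY H y = \sum_x ((x, y) \in H).
Proof.
rewrite /dY card_setE sumJ sum_pair; apply: eq_bigr => x _.
rewrite (bigD1 y) //= eqxx muln1 big1 ?addn0 //.
by move=> y' /negbTE ne; rewrite /= ne muln0.
Qed.

Lemma row_extract (y0 : Y) m : 0 < m -> (forall x, dX H x = m) ->
  (forall y, dY H y <= m) ->
  exists s : X -> Y, [/\ injective s, forall x, (x, s x) \in H &
     forall y, dY H y = m -> exists x, s x = y].
Proof.
move=> m0 hX hY.
set N := [set y | 0 < dY H y].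
have sdY : \sum_y dY H y = m * #|X|.
  by rewrite sum_dY -sum_dX (eq_bigr (fun=> m)) // sum_nat_const mulnC.
have sN : \sum_y (y \in N) = #|N|.
  by rewrite -sum1_card (sumJ N); apply: eq_bigr => y _; rewrite muln1.
have XN : #|X| <= #|N|.
  rewrite -(leq_pmul2l m0) -sdY -sN big_distrr /=; apply: leq_sum => y _.
  by rewrite inE; have := hY y; case: (dY H y) => [|d] //=; rewrite muln1.
pose A2 : {set option X * Y} := [set p | if p.1 is Some x then (x, p.2) \in H
          else (0 < dY H p.2) && (dY H p.2 != m)].
pose a2 (o : option X) := if o is Some _ then 1 else #|N| - #|X|.
pose b2 (y : Y) := nat_of_bool (0 < dY H y).
have hs : \sum_o a2 o = \sum_y b2 y.
  have -> : \sum_y b2 y = #|N| by rewrite -sN; apply: eq_bigr => y _; rewrite /b2 inE.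
  have e1 : \sum_(x : X) 1 = #|X| by exact: sum1_card.
  rewrite sum_option /= e1; exact: subnK.
have sN' : \sum_y (0 < dY H y) = #|N|.
  by rewrite -sN; apply: eq_bigr => y _; rewrite inE.
have hc : fcond A2 a2 b2.
  move=> J K.
  pose c y := \sum_x ((Some x \in J) && ((x, y) \in H)).
  pose JX := \sum_x (Some x \in J).
  have cd y : c y <= dY H y.
    by rewrite dY_sum; apply: leq_sum => x _; case: (Some x \in J).
  have sc : \sum_y c y = m * JX.
    rewrite /c exchange_big /JX big_distrr; apply: eq_bigr => x _ /=.
    case: (Some x \in J) => /=; last by rewrite big1 // muln0.
    by rewrite -(hX x) dX_sum muln1.
  have fa : \sum_(o in J) a2 o = (None \in J) * (#|N| - #|X|) + JX.
    rewrite sumJ sum_option /=; congr (_ + _); apply: eq_bigr => x _; by rewrite muln1.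
  have fb : \sum_(y in K) b2 y = \sum_y ((y \in K) * (0 < dY H y)) by rewrite sumJ.
  pose ee y := ((None \in J) && (0 < dY H y) && (dY H y != m) && (y \notin K))
               + (y \notin K) * c y.
  have fe : eJK A2 J K = \sum_y ee y.
    rewrite /eJK sumJ sum_pair sum_option /ee big_split /=; congr (_ + _).
      apply: eq_bigr => y _; rewrite inE /=.
      by case: (None \in J); case: (0 < dY H y); case: (dY H y != m); case: (y \in K).
    rewrite exchange_big; apply: eq_bigr => y _; rewrite /c big_distrr; apply: eq_bigr => x _.
    by rewrite inE /=; case: (Some x \in J); case: ((x, y) \in H); case: (y \in K).
  have pw y : (None \in J) * m * (0 < dY H y) + c y <=
       (None \in J) * dY H y + m * ((y \in K) * (0 < dY H y) + ee y).
    rewrite /ee; have := cd y; have := hY y.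
    move: (c y) (dY H y) => cc dd.
    by case: (None \in J); case: (y \in K) => /=; nia.
  have : \sum_y ((None \in J) * m * (0 < dY H y) + c y) <=
       \sum_y ((None \in J) * dY H y + m * ((y \in K) * (0 < dY H y) + ee y)).
    by apply: leq_sum => y _; exact: pw.
  rewrite !big_split /= -!big_distrr /= big_split /= sN' sc sdY -fb -fe fa.
  move: XN; case: (None \in J) => /=; nia.
have [H2 [H2A [hx2 hy2]]] := flow_eq hs hc.
have uniqX x y1 y2 : (Some x, y1) \in H2 -> (Some x, y2) \in H2 -> y1 = y2.
  move=> h1 h2; have := hx2 (Some x); rewrite /dX /a2 => /eqP.
  rewrite eqn_leq => /andP [/card_le1_eqP hle _].
  have := hle (Some x, y1) (Some x, y2); rewrite !inE h1 h2 /= eqxx.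
  by move=> /(_ isT isT) [].
have uniqY y x1 x2 : (x1, y) \in H2 -> (x2, y) \in H2 -> x1 = x2.
  move=> h1 h2; have := hy2 y; rewrite /dY /b2 => hb.
  have : #|[set p in H2 | p.2 == y]| <= 1 by rewrite hb; case: (0 < dY H y).
  move=> /card_le1_eqP hle.
  have := hle (x1, y) (x2, y); rewrite !inE h1 h2 /= eqxx.
  by move=> /(_ isT isT) [].
have exX x : exists y, (Some x, y) \in H2.
  have := hx2 (Some x); rewrite /dX /a2 => hc1.
  have : 0 < #|[set p in H2 | p.1 == Some x]| by rewrite hc1.
  case/card_gt0P => p; rewrite !inE => /andP [pH /eqP px].
  by exists p.2; rewrite -px -surjective_pairing.
pose s x := odflt y0 [pick y | (Some x, y) \in H2].
have sP x : (Some x, s x) \in H2.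
  rewrite /s; case: pickP => [y hy //|none].
  by have [y hy] := exX x; move: (none y); rewrite hy.
exists s; split.
- move=> x1 x2 e; have h1 := sP x1; have h2 := sP x2; rewrite e in h1.
  by have [] := uniqY _ _ _ h1 h2.
- by move=> x; have := subsetP H2A _ (sP x); rewrite inE.
- move=> y hy; have := hy2 y; rewrite /dY /b2 hy m0 => hc1.
  have : 0 < #|[set p in H2 | p.2 == y]| by rewrite hc1.
  case/card_gt0P => [[o y']]; rewrite !inE /= => /andP [pH /eqP py]; subst y'.
  case: o pH => [x|] pH.
    by exists x; apply: uniqX (sP x) pH.
  by have := subsetP H2A _ pH; rewrite inE /= hy eqxx andbF.
Qed.
End Row.

Lemma card_set_pred (T : finType) (P : pred T) : #|[set x | P x]| = \sum_x P x.
Proof.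
rewrite -sum1_card [RHS]big_mkcond [LHS]big_mkcond; apply: eq_bigr => x _.
by rewrite !inE; case: (P x).
Qed.

Lemma sum_subn (T : finType) (f g : T -> nat) : (forall i, g i <= f i) ->
  \sum_i (f i - g i) + \sum_i g i = \sum_i f i.
Proof. by move=> h; rewrite -big_split; apply: eq_bigr => i _; exact: subnK. Qed.

Lemma sum_setC (T : finType) (K : {set T}) (f : T -> nat) :
  \sum_(l in K) f l + \sum_(l in ~: K) f l = \sum_l f l.
Proof.
rewrite (sumJ K) (sumJ (~: K)) -big_split; apply: eq_bigr => l _; rewrite inE.
by case: (l \in K); rewrite /= ?mul1n ?mul0n ?addn0.
Qed.

Lemma ex_sum (T : finType) (f : pred T) : (forall i i', f i -> f i' -> i = i') ->
  \sum_i f i = [exists i, f i].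
Proof.
move=> h; case: existsP => [[i0 fi0]|nf].
  rewrite (bigD1 i0) //= fi0 big1 // => i ne; case: (boolP (f i)) => // fi.
  by move: ne; rewrite (h _ _ fi fi0) eqxx.
by rewrite big1 // => i _; case: (boolP (f i)) => // fi; case: nf; exists i.
Qed.

Lemma sum_delta1 (T : finType) (j : T) : \sum_x (j == x) = 1.
Proof.
rewrite (bigD1 j) //= eqxx big1 // => x; rewrite eq_sym => /negbTE ->. done.
Qed.


Lemma ar1 x y z w u v t s : x + y = t -> w + u = v -> v = t -> z <= y -> u <= z + s -> x <= w + s.
Proof. lia. Qed.
Lemma ar2 z q v t a b : a <= q -> z + q = v -> v = t -> b + a = t -> z <= b.
Proof. lia. Qed.
Lemma ar3 z u w v t sm q : z <= u -> sm <= z + q -> w + u = v -> v = t -> sm = t -> w <= q.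
Proof. lia. Qed.
Lemma ar4 w q z sm w' v t : w <= q -> z + q = sm -> w' + w = v -> v = t -> sm = t -> z <= w'.
Proof. lia. Qed.
Lemma ar5 y u s w v x t : y <= u + s -> w + u = v -> x + y = t -> v = t -> w <= x + s.
Proof. lia. Qed.
Lemma ar6 u y s w v x t : u <= y + s -> w + u = v -> x + y = t -> v = t -> x <= w + s.
Proof. lia. Qed.

Section Main.
Variables (n k : nat) (rho : 'I_k -> nat).

Definition A0 r (L : 'I_r -> 'I_n -> 'I_k) : {set 'I_n * 'I_k} :=
  [set p | [forall i, L i p.1 != p.2]].

Lemma occ_sum r (L : 'I_r -> 'I_n -> 'I_k) l : occ L l = \sum_i \sum_j (L i j == l).
Proof. by rewrite /occ card_set_pred sum_pair. Qed.

Lemma sum_occ r (L : 'I_r -> 'I_n -> 'I_k) : \sum_l occ L l = r * n.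
Proof.
under eq_bigr do rewrite /occ card_set_pred.
rewrite exchange_big /=.
transitivity (\sum_(p : 'I_r * 'I_n) 1); last by rewrite sum1_card card_prod !card_ord.
by apply: eq_bigr => p _; rewrite sum_delta1.
Qed.

Lemma mu_sym_sum r (L : 'I_r -> 'I_n -> 'I_k) J l :
  mu_sym L J l = \sum_(j in J) ((j, l) \in A0 L).
Proof. by rewrite /mu_sym card_setE; apply: eq_bigr => j _; rewrite inE. Qed.

Lemma mu_col_sum r (L : 'I_r -> 'I_n -> 'I_k) K j :
  mu_col L K j = \sum_(l in K) ((j, l) \in A0 L).
Proof. by rewrite /mu_col card_setE; apply: eq_bigr => l _; rewrite inE. Qed.

Lemma eJK_A0 r (L : 'I_r -> 'I_n -> 'I_k) J K : eJK (A0 L) J K = mu_JK L J (~: K).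
Proof.
rewrite /eJK /mu_JK sumJ sum_pair exchange_big (sumJ (~: K)); apply: eq_bigr => l _.
rewrite mu_sym_sum sumJ big_distrr; apply: eq_bigr => j _ /=; rewrite in_setC.
by case: ((j, l) \in A0 L); case: (j \in J); case: (l \in K).
Qed.

Lemma mu_KJ_JK r (L : 'I_r -> 'I_n -> 'I_k) J K : mu_KJ L K J = mu_JK L J K.
Proof.
rewrite /mu_KJ /mu_JK (eq_bigr _ (fun j _ => mu_col_sum L K j)).
rewrite (eq_bigr _ (fun l _ => mu_sym_sum L J l)) exchange_big.
by apply: eq_bigr => j _; apply: eq_bigr => l _.
Qed.


Lemma cardm (T : finType) (J : {set T}) m : #|J| * m = \sum_j (j \in J) * m.
Proof. by rewrite -sum_nat_const sumJ. Qed.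

Lemma cardsCn (J : {set 'I_n}) m : #|J| * m + #|~: J| * m = n * m.
Proof. by rewrite -mulnDl cardsC card_ord. Qed.

Section Equiv.
Variables (r : nat) (L : 'I_r -> 'I_n -> 'I_k) (d : 'I_k -> nat) (m : nat).

Definition C5 := forall (J : {set 'I_n}) (K : {set 'I_k}),
      #|J| * m <= \sum_(l in K) d l + mu_JK L J (~: K).
Definition C6 := forall (J : {set 'I_n}) (K : {set 'I_k}),
      \sum_(l in K) d l <= #|J| * m + mu_KJ L K (~: J).

Lemma c1_c5 : (forall J : {set 'I_n}, #|J| * m <= \sum_(l : 'I_k) minn (d l) (mu_sym L J l))
  <-> C5.
Proof.
split=> h J.
  move=> K; apply: leq_trans (h J) _.
  rewrite /mu_JK (sumJ K) (sumJ (~: K)) -big_split; apply: leq_sum => l _; rewrite inE.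
  by case: (l \in K) => /=; lia.
apply: leq_trans (h J [set l | d l <= mu_sym L J l]) _.
rewrite /mu_JK (sumJ [set l | _]) (sumJ (~: _)) -big_split; apply: leq_sum => l _; rewrite !inE.
by case: leqP => /=; lia.
Qed.

Lemma c2_c6 : (forall K : {set 'I_k},
      \sum_(l in K) d l <= \sum_(j : 'I_n) minn m (mu_col L K j)) <-> C6.
Proof.
split=> h.
  move=> J K; apply: leq_trans (h K) _.
  rewrite /mu_KJ cardm (sumJ (~: J)) -big_split; apply: leq_sum => j _; rewrite inE.
  by case: (j \in J) => /=; lia.
move=> K; apply: leq_trans (h [set j | m <= mu_col L K j] K) _.
rewrite /mu_KJ cardm (sumJ (~: _)) -big_split; apply: leq_sum => j _; rewrite !inE.
by case: leqP => /=; lia.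
Qed.

Hypothesis SD : \sum_l d l = n * m.

Lemma c3_c5 : (forall J : {set 'I_n},
      #|J| * m >= \sum_(l : 'I_k) (d l - mu_sym L (~: J) l)) <-> C5.
Proof.
split=> h.
  move=> J K; have := h (~: J); rewrite setCK => hJ.
  have hs : \sum_(l in ~: K) d l <= \sum_(l : 'I_k) (d l - mu_sym L J l) + mu_JK L J (~: K).
    rewrite /mu_JK (sumJ (~: K)) (sumJ (~: K)) -big_split; apply: leq_sum => l _.
    by case: (l \in ~: K) => /=; lia.
  exact: (ar1 (cardsCn J m) (sum_setC K d) SD hJ hs).
move=> J'; set J := ~: J'.
have H5 := h J [set l | d l <= mu_sym L J l].
have hs : \sum_(l : 'I_k) (d l - mu_sym L J l) + (\sum_(l in [set l | d l <= mu_sym L J l]) d l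
          + mu_JK L J (~: [set l | d l <= mu_sym L J l])) = \sum_l d l.
  rewrite /mu_JK (sumJ [set l | _]) (sumJ (~: _)) -!big_split; apply: eq_bigr => l _.
  rewrite !inE; case: leqP => /=; lia.
exact: (ar2 H5 hs SD (cardsCn J' m)).
Qed.

Lemma c4_c6 : (forall K : {set 'I_k},
      \sum_(l in K) d l >= \sum_(j : 'I_n) (m - mu_col L (~: K) j)) <-> C6.
Proof.
have sm : \sum_(j : 'I_n) m = n * m by rewrite sum_nat_const card_ord.
split=> h.
  move=> J K; have := h (~: K); rewrite setCK => hK.
  have hs : \sum_(j : 'I_n) m <= \sum_(j : 'I_n) (m - mu_col L K j) + (#|J| * m + mu_KJ L K (~: J)).
    rewrite /mu_KJ cardm (sumJ (~: J)) -!big_split; apply: leq_sum => j _; rewrite inE.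
    by case: (j \in J) => /=; lia.
  exact: (ar3 hK hs (sum_setC K d) SD sm).
move=> K'; set K := ~: K'.
have H6 := h [set j | m <= mu_col L K j] K.
have hs : \sum_(j : 'I_n) (m - mu_col L K j) + (#|[set j | m <= mu_col L K j]| * m
           + mu_KJ L K (~: [set j | m <= mu_col L K j])) = \sum_(j : 'I_n) m.
  rewrite /mu_KJ cardm (sumJ (~: _)) -!big_split; apply: eq_bigr => j _.
  rewrite !inE; case: leqP => /=; lia.
exact: (ar4 H6 hs (sum_setC K' d) SD sm).
Qed.

Lemma c5_c6 : C5 <-> C6.
Proof.
split=> h J K.
  have := h (~: J) (~: K); rewrite setCK -mu_KJ_JK => h1.
  exact: (ar5 h1 (sum_setC K d) (cardsCn J m) SD).
have := h (~: J) (~: K); rewrite setCK mu_KJ_JK => h1.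
exact: (ar6 h1 (sum_setC K d) (cardsCn J m) SD).
Qed.

End Equiv.

Lemma sum_lt_r r : r <= n -> \sum_(i : 'I_n) (i < r) = r.
Proof.
move=> hrn; transitivity (\sum_(i < n | i < r) 1).
  by rewrite [RHS]big_mkcond; apply: eq_bigr => i _; case: (i < r).
by rewrite (big_ord_narrow hrn) sum1_card card_ord.
Qed.

Lemma sum_ge_r r : r <= n -> \sum_(i : 'I_n) (r <= i) = n - r.
Proof.
move=> hrn; have := sum_lt_r hrn.
have : \sum_(i : 'I_n) (i < r) + \sum_(i : 'I_n) (r <= i) = n.
  rewrite -big_split /= -[RHS]card_ord -sum1_card; apply: eq_bigr => i _.
  by case: ltnP.
lia.
Qed.

Lemma necessity r (L : 'I_r -> 'I_n -> 'I_k) : r <= n -> completable rho L ->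
  (forall l, rho l - occ L l <= n - r) /\
  exists H : {set 'I_n * 'I_k}, [/\ H \subset A0 L, forall j, dX H j = n - r & forall l, dY H l = rho l - occ L l].
Proof.
move=> hrn [S [[Srow Scol Socc] agree]].
pose w (i : 'I_r) : 'I_n := widen_ord hrn i.
have Sw i j : S (w i) j = L i j by apply: agree.
pose H := [set p : 'I_n * 'I_k | [exists i : 'I_n, (r <= i) && (S i p.1 == p.2)]].
have HA : H \subset A0 L.
  apply/subsetP => [[j l]]; rewrite !inE /= => /existsP [i /andP [ri /eqP Sij]].
  apply/forallP => i'; apply/eqP => Lij.
  have : S (w i') j = S i j by rewrite Sw Lij.
  move/Scol => e; move: ri; rewrite -e /= leqNgt ltn_ord //.
have colsum (j : 'I_n) (l : 'I_k) : \sum_(i : 'I_n) ((r <= i) && (S i j == l)) = ((j, l) \in H).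
  rewrite inE /= (ex_sum (f := fun i : 'I_n => (r <= i) && (S i j == l))) //.
  move=> i i' /andP [_ /eqP e1] /andP [_ /eqP e2]; apply: (Scol j); by rewrite e1 e2.
have rowle (i : 'I_n) (l : 'I_k) : \sum_j (S i j == l) <= 1.
  rewrite (ex_sum (f := fun j : 'I_n => S i j == l)) ?leq_b1 //.
  move=> j j' /eqP e1 /eqP e2; apply: (Srow i); by rewrite e1 e2.
have low (l : 'I_k) : \sum_(i : 'I_n | ~~ (i < r)) \sum_j (S i j == l) = dY H l.
  rewrite dY_sum (eq_bigr _ (fun j _ => esym (colsum j l))) [RHS]exchange_big [LHS]big_mkcond /=.
  apply: eq_bigr => i _; rewrite -leqNgt; case: (r <= i) => //=.
  by rewrite big1.
have rhoE (l : 'I_k) : rho l = occ L l + dY H l.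
  rewrite -Socc card_set_pred sum_pair (bigID (fun i : 'I_n => i < r)) /= -low.
  congr (_ + _); rewrite occ_sum.
  rewrite (big_ord_narrow (F := fun i => \sum_j (S i j == l)) hrn).
  by apply: eq_bigr => i _; apply: eq_bigr => j _; rewrite Sw.
split.
  move=> l; rewrite rhoE addKn -low -(sum_ge_r hrn).
  apply: (@leq_trans (\sum_(i : 'I_n | ~~ (i < r)) 1)).
    by apply: leq_sum => i _; exact: rowle.
  by rewrite big_mkcond /=; apply: leq_sum => i _; rewrite -leqNgt; case: (r <= i).
exists H; split=> //.
  move=> j; rewrite dX_sum (eq_bigr _ (fun l _ => esym (colsum j l))) exchange_big /=.
  rewrite -(sum_ge_r hrn); apply: eq_bigr => i _; case: (r <= i) => /=.
    by rewrite sum_delta1.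
  by rewrite big1.
by move=> l; rewrite rhoE addKn.
Qed.

Lemma restrict r (L : 'I_r -> 'I_n -> 'I_k) (L' : 'I_r.+1 -> 'I_n -> 'I_k) :
  (forall i j, L' (widen_ord (leqnSn r) i) j = L i j) ->
  completable rho L' -> completable rho L.
Proof.
move=> Lw [S [sq ag]]; exists S; split=> // i i' j e.
by rewrite (ag i (widen_ord (leqnSn r) i') j e) Lw.
Qed.

Lemma completion (k0 : 0 < k) m : forall r (L : 'I_r -> 'I_n -> 'I_k),
  n - r = m -> r <= n -> rho_latin_rect rho L ->
  (forall l, rho l - occ L l <= n - r) ->
  (exists H : {set 'I_n * 'I_k},
     [/\ H \subset A0 L, forall j, dX H j = n - r & forall l, dY H l = rho l - occ L l]) ->
  completable rho L.
Proof.
elim: m => [|m IH] r L hm hrn [Lrow Lcol Locc] c0 [H [HA hX hY]].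
  have e : r = n by lia.
  subst r.
  have H0 : #|H| = 0.
    rewrite -sum_dX big1 // => j _; rewrite hX; lia.
  have occE l : occ L l = rho l.
    have : dY H l <= #|H| by rewrite -sum_dY (bigD1 l) //=; apply: leq_addr.
    rewrite H0 hY leqn0 subn_eq0 => h1; apply/eqP; rewrite eqn_leq h1 andbT.
    exact: Locc.
  exists L; split.
    by split=> // l; rewrite -occE.
  by move=> i i' j /val_inj ->.
have hr : r < n by lia.
have [s [sinj sH stight]] :
    exists s : 'I_n -> 'I_k, [/\ injective s, forall x, (x, s x) \in H &
     forall y, dY H y = m.+1 -> exists x, s x = y].
  apply: (row_extract (Ordinal k0)) => //.
    by move=> x; rewrite hX.
  by move=> y; rewrite hY -hm; apply: c0.
pose L' : 'I_r.+1 -> 'I_n -> 'I_k :=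
  fun i j => if (insub (nat_of_ord i) : option 'I_r) is Some i' then L i' j else s j.
have L'w i j : L' (widen_ord (leqnSn r) i) j = L i j by rewrite /L' /= valK.
have L'm j : L' ord_max j = s j by rewrite /L' /= insubF // ltnn.
have cases (i : 'I_r.+1) : (exists i' : 'I_r, i = widen_ord (leqnSn r) i') \/ i = ord_max.
  case: (ltnP i r) => h; first by left; exists (Ordinal h); apply: val_inj.
  by right; apply: val_inj => /=; have := ltn_ord i; lia.
have sA j i : L i j != s j.
  by have := subsetP HA _ (sH j); rewrite inE => /forallP.
have occE l : occ L' l = occ L l + \sum_j (s j == l).
  rewrite !occ_sum big_ord_recr /=; congr (_ + _).
    by apply: eq_bigr => i _; apply: eq_bigr => j _; rewrite L'w.
  by apply: eq_bigr => j _; rewrite L'm.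
have sle l : \sum_j (s j == l) <= dY H l.
  rewrite dY_sum; apply: leq_sum => j _; case: eqP => // <-; by rewrite sH.
have tight l : rho l - occ L l = n - r -> 0 < \sum_j (s j == l).
  rewrite hm => e; have [x sx] : exists x, s x = l by apply: stight; rewrite hY e.
  by rewrite (bigD1 x) //= sx eqxx.
have c0' l : rho l - occ L' l <= n - r.+1.
  rewrite occE; have := c0 l; have := sle l; have := hY l; have := tight l; lia.
have rect' : rho_latin_rect rho L'.
  split.
  - move=> i j1 j2; case: (cases i) => [[i' ->]|->]; rewrite ?L'w ?L'm.
      exact: Lrow.
    exact: sinj.
  - move=> j i1 i2; case: (cases i1) => [[i1' ->]|->]; case: (cases i2) => [[i2' ->]|->];
      rewrite ?L'w ?L'm //.
    + by move/Lcol => ->.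
    + by move=> e; have := sA j i1'; rewrite e eqxx.
    + by move=> e; have := sA j i2'; rewrite e eqxx.
  - move=> l; rewrite -/(occ L' l) occE; have := sle l; have := hY l; have := Locc l.
    rewrite -/(occ L l); lia.
pose H' := [set p in H | s p.1 != p.2].
have split1 j l : ((j, l) \in H) = ((j, l) \in H') + (s j == l) :> nat.
  rewrite inE /=; case: eqP => [<-|_]; first by rewrite sH.
  by case: ((j, l) \in H).
apply: (restrict L'w); apply: (IH r.+1 L') => //.
- lia.
- exists H'; split.
  + apply/subsetP => [[j l]]; rewrite !inE /= => /andP [jl sjl].
    apply/forallP => i; case: (cases i) => [[i' ->]|->]; rewrite ?L'w ?L'm //.
    by have := subsetP HA _ jl; rewrite inE => /forallP.
  + move=> j; have := hX j; rewrite !dX_sum (eq_bigr _ (fun l _ => split1 j l)) big_split /=.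
    rewrite sum_delta1; lia.
  + move=> l; have := hY l; rewrite occE !dY_sum (eq_bigr _ (fun j _ => split1 j l)) big_split /=.
    lia.
Qed.

End Main.

Lemma iff_swap (P A B C : Prop) : (P <-> A /\ B) -> (C <-> B) -> (P <-> A /\ C).
Proof. tauto. Qed.

Unset Implicit Arguments.

Theorem theorem3p1 (n k : nat) (rho : 'I_k -> nat) (r : nat)
  (L : 'I_r -> 'I_n -> 'I_k) :
  0 < n -> 0 < k ->
  (forall l : 'I_k, 1 <= rho l <= n) -> n <= k ->
  \sum_(l : 'I_k) rho l = n ^ 2 ->
  r < n ->
  rho_latin_rect rho L ->
  let c0 := forall l : 'I_k, rho l - occ L l <= n - r in
  let c1 := forall J : {set 'I_n},
      #|J| * (n - r) <= \sum_(l : 'I_k) minn (rho l - occ L l) (mu_sym L J l) in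
  let c2 := forall K : {set 'I_k},
      \sum_(l in K) (rho l - occ L l) <= \sum_(j : 'I_n) minn (n - r) (mu_col L K j) in
  let c3 := forall J : {set 'I_n},
      #|J| * (n - r) >= \sum_(l : 'I_k) ((rho l - occ L l) - mu_sym L (~: J) l) in
  let c4 := forall K : {set 'I_k},
      \sum_(l in K) (rho l - occ L l) >= \sum_(j : 'I_n) ((n - r) - mu_col L (~: K) j) in
  let c5 := forall (J : {set 'I_n}) (K : {set 'I_k}),
      #|J| * (n - r) <= \sum_(l in K) (rho l - occ L l) + mu_JK L J (~: K) in
  let c6 := forall (J : {set 'I_n}) (K : {set 'I_k}),
      \sum_(l in K) (rho l - occ L l) <= #|J| * (n - r) + mu_KJ L K (~: J) in
  (completable rho L <-> c0 /\ c1) /\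
  (completable rho L <-> c0 /\ c2) /\
  (completable rho L <-> c0 /\ c3) /\
  (completable rho L <-> c0 /\ c4) /\
  (completable rho L <-> c0 /\ c5) /\
  (completable rho L <-> c0 /\ c6).
Proof.
move=> n0 k0 hrho nk hsum hr hrect c0 c1 c2 c3 c4 c5 c6.
pose d := fun l => rho l - occ L l.
pose m := n - r.
have Locc : forall l, occ L l <= rho l by case: hrect.
have SD : \sum_l d l = n * m.
  have := sum_subn Locc; rewrite hsum sum_occ.
  rewrite /m /d mulnBr mulnC -mulnn => <-; rewrite addnK //.
have C5f : C5 L d m <-> fcond (A0 L) (fun _ => m) d.
  split=> h J K; have := h J K; by rewrite sum_nat_const eJK_A0.
have main : completable rho L <-> c0 /\ C5 L d m.
  split.
    move=> hc; have [h0 [H [HA hX hY]]] := necessity (ltnW hr) hc.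
    split=> //; apply/C5f; exact: (sol_cond HA hX hY).
  move=> [h0 /C5f h5].
  have [H [HA hX hY]] : exists H : {set 'I_n * 'I_k}, [/\ H \subset A0 L, forall j, dX H j = m & forall l, dY H l = d l].
    have := flow_eq _ h5; rewrite sum_nat_const card_ord SD => /(_ erefl).
    by move=> [H [? [? ?]]]; exists H.
  exact: (completion k0 (erefl (n - r)) (ltnW hr) hrect h0 (ex_intro _ H (And3 HA hX hY))).
have e1 : c1 <-> C5 L d m := c1_c5 L d m.
have e6 : c6 <-> C5 L d m := iff_sym (c5_c6 L SD).
have e2 : c2 <-> C5 L d m := iff_trans (c2_c6 L d m) (iff_sym (c5_c6 L SD)).
have e3 : c3 <-> C5 L d m := c3_c5 L SD.
have e4 : c4 <-> C5 L d m := iff_trans (c4_c6 L SD) (iff_sym (c5_c6 L SD)).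
have e5 : c5 <-> C5 L d m := iff_refl _.
by split; [|split; [|split; [|split; [|split]]]]; apply: (iff_swap main).
Qed.
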